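(* Let $H$ be a binary tree based graph, $M$ a pseudomatching of $H$, and $S$ a set of literals with $Vars(S)=V(H)\setminus\bigcup M$ that is $1$-comfortable w.r.t. $M$. Then for every $S'\in{\bf EC}(S)$, $\Pr(\{S'\})=(1/2)^{|V(H)\setminus Fix(S)|}$.
   Context: Sets of literals never contain a variable together with its negation; $Vars(S)$ is the set of variables occurring in $S$. A rooted tree is extended if none of its leaves has a sibling. A graph $H$ is a binary tree based graph if it is the edge-disjoint union of extended rooted trees $T_1,\dots,T_m$ with roots $t_1,\dots,t_m$ such that every leaf of some $T_i$ is a leaf of exactly two of the trees, and any two trees have at most one common vertex, which is a leaf of both. Vertices are root vertices, leaf vertices, and internal vertices (the rest); two internal vertices are siblings if they are siblings in the tree containing them. $T_i,T_j$ are adjacent if they share a leaf $\ell_{i,j}$; $P_{i,j}$ is the path between $t_i$ and $t_j$ in $T_i\cup T_j$. A pseudoedge is a pair $\{t_i,t_j\}$ with $T_i,T_j$ adjacent; a pseudomatching is a set of pairwise disjoint pseudoedges; $\bigcup M$ is the set of their ends. $\phi_H$ is the CNF on variables $V(H)$ with a clause $C_{i,j}$ (positive literals of $V(P_{i,j})$) for each pseudoedge. $S$ falsifies a clause if all its variables occur negatively in $S$. $S$ respects $\{t_i,t_j\}$ if all non-root variables of $C_{i,j}$ occur negatively in $S$ and the siblings of all internal variables of $C_{i,j}$ occur positively in $S$. $S$ is $1$-comfortable w.r.t. $M$ if it falsifies no clause of $\phi_H$ and respects every pseudoedge of $M$. The positive literal $\ell_{i,j}$ is fixed w.r.t. a set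 $S$ of literals if $\ell_{i,j}\in S$ and all other variables of $C_{i,j}$ occur negatively in $S$; $Fix(S)$ is the set of fixed literals. ${\bf SAT}(H)$ is the set of satisfying assignments of $\phi_H$; each $S'\in{\bf SAT}(H)$ has probability $(1/2)^{|V(H)\setminus Fix(S')|}$. ${\bf EC}(S)=\{S'\in{\bf SAT}(H):S\subseteq S'\}$. *)

(* Defs.v *)
From mathcomp Require Import all_boot all_order all_algebra.
Set Implicit Arguments. Unset Strict Implicit. Unset Printing Implicit Defensive.
Import GRing.Theory Num.Theory.

(* Conventions:
   - Vertices (= variables) live in a finite type V; V(H) is the union of
     the vertex sets of the trees (not necessarily all of V).
   - A family of m rooted trees is given by vertex sets, roots and parent
     functions; tree i has vertex set tverts i, root troot i and the
     parent map tpar i (with tpar i root = root).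
   - A literal is a pair (v, b) : V * bool, b = true for the positive literal. *)

Record forest (V : finType) := Forest {
  ntrees : nat;
  tverts : 'I_ntrees -> {set V};
  troot  : 'I_ntrees -> V;
  tpar   : 'I_ntrees -> V -> V }.
Arguments tverts {V} f _.
Arguments troot {V} f _.
Arguments tpar {V} f _ _.

Section Defs.
Variable V : finType.
Variable H : forest V.
Local Notation I := 'I_(ntrees H).
Local Notation VT := (tverts H).
Local Notation rt := (troot H).
Local Notation par := (tpar H).

Definition rooted_tree (i : I) : Prop :=
  [/\ rt i \in VT i,
      (forall v, v \in VT i -> par i v \in VT i),
      par i (rt i) = rt i &
      (forall v, v \in VT i -> exists k, iter k (par i) v = rt i)].

Definition tchild (i : I) (u v : V) : bool :=
  [&& u \in VT i, u != rt i & par i u == v].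

Definition tleaf (i : I) (v : V) : bool :=
  [&& v \in VT i, v != rt i & ~~ [exists u, tchild i u v]].

Definition tsib (i : I) (u v : V) : bool :=
  [&& u \in VT i, v \in VT i, u != v, u != rt i, v != rt i & par i u == par i v].

Definition extended (i : I) : Prop :=
  forall l u, tleaf i l -> ~~ tsib i l u.

Definition tedges (i : I) : {set {set V}} :=
  [set [set v; par i v] | v in VT i :\ rt i].

Definition binary_tree_based : Prop :=
  [/\ (forall i, rooted_tree i /\ extended i),
      (forall i j, i != j -> [disjoint tedges i & tedges j]),
      (forall i l, tleaf i l -> #|[set j | tleaf j l]| = 2) &
      (forall i j, i != j ->
         #|VT i :&: VT j| <= 1 /\
         (forall v, v \in VT i :&: VT j -> tleaf i v /\ tleaf j v))].

Definition VH : {set V} := \bigcup_(i : I) VT i.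

Definition is_root (v : V) : bool := [exists i : I, rt i == v].
Definition is_leaf (v : V) : bool := [exists i : I, tleaf i v].
Definition internal (v : V) : bool := [&& v \in VH, ~~ is_root v & ~~ is_leaf v].

Definition sibling (u v : V) : bool :=
  [&& internal u, internal v & [exists i : I, tsib i u v]].

Definition adjacent (i j : I) : bool :=
  (i != j) && [exists l, tleaf i l && tleaf j l].

Definition anc (i : I) (v : V) : {set V} :=
  [set iter k (par i) v | k : 'I_#|V|.+1].

(* V(P_{i,j}): the path t_i -- l_{i,j} -- t_j in T_i u T_j
   (the variables of the clause C_{i,j}) *)
Definition pathV (i j : I) : {set V} :=
  \bigcup_(l in VT i :&: VT j) (anc i l :|: anc j l).

Definition pseudoedge (e : {set V}) : Prop :=
  exists i j, adjacent i j /\ e = [set rt i; rt j].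

Definition pseudomatching (M : {set {set V}}) : Prop :=
  (forall e, e \in M -> pseudoedge e) /\
  (forall e f, e \in M -> f \in M -> e != f -> [disjoint e & f]).

Definition bigcupM (M : {set {set V}}) : {set V} := \bigcup_(e in M) e.

Definition consistent (S : {set V * bool}) : Prop :=
  forall v, ~ ((v, true) \in S /\ (v, false) \in S).

Definition Vars (S : {set V * bool}) : {set V} :=
  [set v | ((v, true) \in S) || ((v, false) \in S)].

(* S falsifies the (positive) clause with variable set C *)
Definition falsifies (S : {set V * bool}) (C : {set V}) : Prop :=
  forall v, v \in C -> (v, false) \in S.

Definition respects (S : {set V * bool}) (i j : I) : Prop :=
  (forall v, v \in pathV i j -> ~~ is_root v -> (v, false) \in S) /\
  (forall v u, v \in pathV i j -> internal v -> sibling v u -> (u, true) \in S).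

Definition comfortable1 (S : {set V * bool}) (M : {set {set V}}) : Prop :=
  (forall i j, adjacent i j -> ~ falsifies S (pathV i j)) /\
  (forall e, e \in M -> forall i j, adjacent i j -> e = [set rt i; rt j] ->
     respects S i j).

(* satisfying assignments of phi_H: total assignments of V(H) satisfying
   every clause C_{i,j} *)
Definition isSAT (S' : {set V * bool}) : Prop :=
  [/\ consistent S', Vars S' = VH &
      (forall i j, adjacent i j -> exists2 v, v \in pathV i j & (v, true) \in S')].

(* Fix(S), as a set of variables (the fixed positive literals l_{i,j}) *)
Definition Fix (S : {set V * bool}) : {set V} :=
  [set l | ((l, true) \in S) &&
     [exists i : I, exists j : I,
        [&& adjacent i j, l \in VT i :&: VT j &
            [forall v in pathV i j, (v != l) ==> ((v, false) \in S)]]]].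

Definition prob (S' : {set V * bool}) : rat := (1 / 2) ^+ #|VH :\: Fix S'|.

Definition EC (S S' : {set V * bool}) : Prop := isSAT S' /\ S \subset S'.

End Defs.

(* Main.v *)
Require Import Defs.
From mathcomp Require Import all_boot all_order all_algebra.
Set Implicit Arguments. Unset Strict Implicit. Unset Printing Implicit Defensive.

Section L.
Variable V : finType.
Variable H : forest V.
Hypothesis btb : binary_tree_based H.
Implicit Types i j p q : 'I_(ntrees H).

Lemma iter_anc i v k : iter k (tpar H i) v \in anc i v.
Proof.
set f := tpar H i.
have hc : fconnect f v (iter k f v) := fconnect_iter f k v.
have lt : findex f v (iter k f v) < #|V|.+1.
  apply: (leq_trans (findex_max hc)); apply: leq_trans (max_card _) _; by [].
apply/imsetP; exists (Ordinal lt) => //=; by rewrite iter_findex.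
Qed.

Lemma iter_in i v k : v \in tverts H i -> iter k (tpar H i) v \in tverts H i.
Proof.
case: btb => h _ _ _; case: (h i) => [[_ hp _ _] _].
move=> hv; elim: k => //= k IH. by apply: hp.
Qed.

Lemma anc_sub i v : v \in tverts H i -> anc i v \subset tverts H i.
Proof. by move=> hv; apply/subsetP => x /imsetP [k _ ->]; apply: iter_in. Qed.

Lemma root_in i : troot H i \in tverts H i.
Proof. by case: btb => h _ _ _; case: (h i) => [[]]. Qed.

Lemma inter_leaf i j v : i != j -> v \in tverts H i -> v \in tverts H j -> tleaf i v /\ tleaf j v.
Proof. by case: btb => _ _ _ h ij vi vj; apply: (proj2 (h i j ij)); rewrite inE vi vj. Qed.

Lemma root_uniq p i : troot H p \in tverts H i -> p = i.
Proof.
move=> h; apply/eqP; apply/negPn/negP => ne.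
by case/and3P: (proj1 (inter_leaf ne (root_in p) h)) => _; rewrite eqxx.
Qed.

Lemma pathV_in i j v : v \in pathV i j -> (v \in tverts H i) || (v \in tverts H j).
Proof.
move=> /bigcupP [l]; rewrite inE => /andP [li lj]; rewrite inE => /orP [] h.
  by rewrite (subsetP (anc_sub li) _ h).
by rewrite (subsetP (anc_sub lj) _ h) orbT.
Qed.

Lemma pathV_sym i j : pathV i j = pathV j i.
Proof. by rewrite /pathV setIC; apply: eq_bigr => l _; rewrite setUC. Qed.

Lemma sib_internal i u w : tsib i u w -> internal H u.
Proof.
move=> hs; have := hs; case/and5P => ui wi uw ur /andP [wr pe].
apply/and3P; split.
- by apply/bigcupP; exists i.
- apply/negP => /existsP [p /eqP e]; subst u.
  by move: ur; rewrite (root_uniq ui) eqxx.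
- apply/negP => /existsP [p lp].
  have lpi : tleaf i u.
    case: (eqVneq p i) => [<- //|ne].
    by case: (inter_leaf ne (_ : u \in tverts H p) ui) => //; case/and3P: lp.
  case: btb => h _ _ _; have := proj2 (h i) u w lpi; by rewrite hs.
Qed.

Lemma reach i v : v \in tverts H i -> exists n, iter n (tpar H i) v = troot H i.
Proof. by case: btb => h _ _ _; case: (h i) => [[_ _ _ hr] _]; apply: hr. Qed.

Lemma par_root i : tpar H i (troot H i) = troot H i.
Proof. by case: btb => h _ _ _; case: (h i) => [[]]. Qed.

Lemma iter_root i n : iter n (tpar H i) (troot H i) = troot H i.
Proof. by elim: n => //= n ->; apply: par_root. Qed.

Lemma leaf_nopar i x u : tleaf i x -> u \in tverts H i -> u != troot H i ->
  tpar H i u != x.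
Proof.
case/and3P => _ _ /existsPn nc ui ur; apply/negP => /eqP e.
by have := nc u; rewrite /tchild ui ur e eqxx.
Qed.

Lemma tsib_sym i u w : tsib i u w -> tsib i w u.
Proof.
by case/and5P => a b c d /andP [e f]; rewrite /tsib a b eq_sym c d e eq_sym f.
Qed.

Lemma diverge i a b : a != b -> tleaf i a -> tleaf i b ->
  exists c1 c2, [/\ c1 \in anc i a, c2 \in anc i b & tsib i c1 c2].
Proof.
move=> ab la lb.
have ai : a \in tverts H i by case/and3P: la.
have bi : b \in tverts H i by case/and3P: lb.
have ar : a != troot H i by case/and3P: la.
have br : b != troot H i by case/and3P: lb.
have [Ka hKa] := reach ai.
have [Kb hKb] := reach bi.
pose P m := [exists n : 'I_Kb.+1, iter n (tpar H i) b == iter m (tpar H i) a].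
have exP : exists m, P m.
  by exists Ka; apply/existsP; exists ord_max; rewrite /= hKa hKb.
case: (ex_minnP exP) => m Pm minm.
case/existsP: Pm => n0 /eqP e0.
pose Q n := iter n (tpar H i) b == iter m (tpar H i) a.
have exQ : exists n, Q n by exists n0; apply/eqP.
case: (ex_minnP exQ) => n /eqP en minn.
have nn0 : n <= n0 by apply: minn; apply/eqP.
have nKb : n < Kb.+1 by apply: leq_ltn_trans nn0 (ltn_ord n0).
clear nn0 e0 n0 exQ; subst Q.
case: m en minm minn => [|m'] en minm minn.
  case: n en nKb minn => [|n'] /= en _ _; first by rewrite en eqxx in ab.
  have ui := iter_in n' bi.
  case: (eqVneq (iter n' (tpar H i) b) (troot H i)) => ur.
    by move: en; rewrite ur par_root => e; rewrite -e eqxx in ar.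
  by have := leaf_nopar la ui ur; rewrite en eqxx.
case: n en nKb minn => [|n'] /= en nKb minn.
  have ui := iter_in m' ai.
  case: (eqVneq (iter m' (tpar H i) a) (troot H i)) => ur.
    by move: en; rewrite ur par_root => e; rewrite e eqxx in br.
  by have := leaf_nopar lb ui ur; rewrite en eqxx.
exists (iter m' (tpar H i) a), (iter n' (tpar H i) b); split; try exact: iter_anc.
have c1i := iter_in m' ai; have c2i := iter_in n' bi.
have Pm' : forall n : 'I_Kb.+1, iter n (tpar H i) b = iter m' (tpar H i) a -> False.
  move=> n e; suff: m'.+1 <= m' by rewrite ltnn.
  by apply: minm; apply/existsP; exists n; rewrite e.
have Qn' : iter n' (tpar H i) b = iter m'.+1 (tpar H i) a -> False.
  move=> e; suff: n'.+1 <= n' by rewrite ltnn.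
  by apply: minn; apply/eqP.
rewrite /tsib c1i c2i /=; apply/and4P; split.
- apply/negP => /eqP e.
  have lt : n' < Kb.+1 by apply: ltnW.
  by apply: (Pm' (Ordinal lt)); rewrite /= e.
- apply/negP => /eqP e.
  apply: (Pm' (Ordinal nKb)); by rewrite /= en e par_root.
- apply/negP => /eqP e.
  by apply: Qn'; rewrite /= -en e par_root.
- by rewrite en eqxx.
Qed.

Lemma adjacent_sym i j : adjacent i j = adjacent j i.
Proof.
rewrite /adjacent eq_sym; congr (_ && _).
by apply/existsP/existsP => [] [l h]; exists l; rewrite andbC.
Qed.

Lemma respects_sym S i j : respects S i j -> respects S j i.
Proof. by rewrite /respects pathV_sym. Qed.

Lemma in_pathV i j l v : l \in tverts H i :&: tverts H j -> v \in anc i l -> v \in pathV i j.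
Proof. by move=> hl hv; apply/bigcupP; exists l => //; rewrite inE hv. Qed.

Lemma leaf_not_internal i l : tleaf i l -> ~~ internal H l.
Proof. by move=> hl; rewrite /internal; apply/negP => /and3P [_ _ /negP []]; apply/existsP; exists i. Qed.

Lemma core (S S' : {set V * bool}) i j q l :
  S \subset S' -> consistent S' -> adjacent i j -> l \in tverts H i :&: tverts H j ->
  (l, true) \in S' -> (forall v, v \in pathV i j -> v != l -> (v, false) \in S') ->
  adjacent i q -> respects S i q -> False.
Proof.
move=> sub cons adj lij lt hfix adjq [r1 r2].
have ij : i != j by case/andP: adj.
have iq : i != q by case/andP: adjq.
have [li lj] : l \in tverts H i /\ l \in tverts H j by move: lij; rewrite inE => /andP.
have [tli tlj] := inter_leaf ij li lj.
have lanc : l \in anc i l by exact: (iter_anc i l 0).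
case: (eqVneq q j) => [eq | qj].
  subst q.
  have : (l, false) \in S.
    apply: r1; first exact: in_pathV lij lanc.
    apply/negP => /existsP [p /eqP e]; subst l.
    have pi := root_uniq li; subst p.
    by case/and3P: tli => _; rewrite eqxx.
  by move=> /(subsetP sub) lf; apply: (cons l).
case/andP: adjq => _ /existsP [b /andP [tbi tbq]].
have lb : l != b.
  apply/negP => /eqP e; subst b.
  case: btb => _ _ hc _.
  have := hc i l tli.
  have : 2 < #|[set p : 'I_(ntrees H) | tleaf p l]|.
    apply/card_gt2P; exists i, j, q; rewrite !inE tli tlj tbq; split => //.
    by split => //; rewrite eq_sym.
  by move=> + e; rewrite e.
have [c1 [c2 [c1a c2b s12]]] := diverge lb tli tbi.
have bi : b \in tverts H i by case/and3P: tbi.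
have bq : b \in tverts H q by case/and3P: tbq.
have bij : b \in tverts H i :&: tverts H q by rewrite inE bi bq.
have s21 := tsib_sym s12.
have ic1 := sib_internal s12.
have ic2 := sib_internal s21.
have c1t : (c1, true) \in S.
  apply: (r2 c2 c1); first exact: in_pathV bij c2b.
    exact: ic2.
  by rewrite /sibling ic1 ic2; apply/existsP; exists i.
have c1f : (c1, false) \in S'.
  apply: hfix; first exact: in_pathV lij c1a.
  apply/negP => /eqP e; subst c1.
  by move: ic1; rewrite (negbTE (leaf_not_internal tli)).
by apply: (cons c1); split => //; apply: (subsetP sub).
Qed.

Lemma pathV_VH i j v : v \in pathV i j -> v \in VH H.
Proof. by move/pathV_in => /orP [] h; apply/bigcupP; [exists i | exists j]. Qed.

Lemma noM (M : {set {set V}}) (S S' : {set V * bool}) i j l v :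
  pseudomatching H M -> comfortable1 H S M ->
  S \subset S' -> consistent S' -> adjacent i j -> l \in tverts H i :&: tverts H j ->
  (l, true) \in S' -> (forall v, v \in pathV i j -> v != l -> (v, false) \in S') ->
  v \in pathV i j -> v \notin bigcupM M.
Proof.
move=> [pm1 _] [_ cm] sub cons adj lij lt hfix vp.
apply/negP => /bigcupP [e eM ve].
have [i' [k' [adj' ee]]] := pm1 e eM.
have resp := cm e eM i' k' adj' ee.
have gen : forall p q, troot H p = v -> adjacent p q -> respects S p q -> False.
  move=> p q pv apq rpq.
  case/orP: (pathV_in vp) => vin.
    have ep : p = i by apply: root_uniq; rewrite pv.
    subst p.
    exact: (core sub cons adj lij lt hfix apq rpq).
  have ep : p = j by apply: root_uniq; rewrite pv.
  subst p.
  apply: (core (j := i) sub cons _ _ lt _ apq rpq).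
  - by rewrite adjacent_sym.
  - by rewrite setIC.
  - by move=> w; rewrite pathV_sym; apply: hfix.
move: ve; rewrite ee !inE => /orP [] /eqP ve.
  exact: gen (esym ve) adj' resp.
by apply: (gen k' i') => //; [rewrite adjacent_sym | apply: respects_sym].
Qed.

Lemma Fix_eq (M : {set {set V}}) (S S' : {set V * bool}) :
  pseudomatching H M -> consistent S -> Vars S = VH H :\: bigcupM M ->
  comfortable1 H S M -> consistent S' -> S \subset S' -> Fix H S' = Fix H S.
Proof.
move=> pm consS vars comf cons sub.
apply/eqP; rewrite eqEsubset; apply/andP; split; apply/subsetP => l.
- rewrite !inE => /andP [lt /existsP [i /existsP [j /and3P [adj lij /forallP h]]]].
  have hfix : forall v, v \in pathV i j -> v != l -> (v, false) \in S'.
    by move=> v vp vl; move/implyP: (h v) => /(_ vp); rewrite vl.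
  have inS : forall v, v \in pathV i j -> ((v, true) \in S) || ((v, false) \in S).
    move=> v vp.
    have : v \in Vars S by rewrite vars inE (pathV_VH vp) (noM pm comf sub cons adj lij lt hfix vp).
    by rewrite inE.
  have li : l \in tverts H i by move: lij; rewrite inE => /andP [].
  have lp : l \in pathV i j by apply: in_pathV lij (iter_anc i l 0).
  apply/andP; split.
    case/orP: (inS l lp) => [// | lf].
    by case: (cons l); split => //; apply: (subsetP sub).
  apply/existsP; exists i; apply/existsP; exists j; rewrite adj lij /=.
  apply/forallP => v; apply/implyP => vp; apply/implyP => vl.
  case/orP: (inS v vp) => [vt | //].
  by case: (cons v); split; [apply: (subsetP sub) | apply: hfix].
- rewrite !inE => /andP [lt /existsP [i /existsP [j /and3P [adj lij /forallP h]]]].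
  rewrite (subsetP sub _ lt) /=.
  apply/existsP; exists i; apply/existsP; exists j; rewrite adj lij /=.
  apply/forallP => v; apply/implyP => vp; apply/implyP => vl.
  by apply: (subsetP sub); move/implyP: (h v) => /(_ vp); rewrite vl.
Qed.
End L.

Unset Implicit Arguments.

Theorem lemma12 (V : finType) (H : forest V) (M : {set {set V}})
  (S : {set V * bool}) :
  binary_tree_based H ->
  pseudomatching H M ->
  consistent S ->
  Vars S = VH H :\: bigcupM M ->
  comfortable1 H S M ->
  forall S' : {set V * bool}, EC H S S' ->
    prob H S' = ((1 / 2) ^+ #|VH H :\: Fix H S|)%R.
Proof.
move=> btb pm consS vars comf S' [[cons _ _] sub].
by rewrite /prob (Fix_eq btb pm consS vars comf cons sub).
Qed.
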